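(* Let $G$ be a closed graph on a compact metrizable space $X$. Then: (a) $P_G$ is $\sigma$-centered iff $\chi(G)\leq\aleph_0$; (b) $P_G$ is $\sigma$-liminf-centered iff $\lambda(G)\leq\aleph_0$.
   Context: A graph $G$ on $X$ is a symmetric irreflexive relation, closed if closed in $(X\times X)\setminus$ diagonal. A $G$-anticlique is a set with no two distinct $G$-connected points; $\chi(G)$ is the least size of a family of $G$-anticliques covering $X$. A set $A\subset X$ is $G$-loose if every $x\in X$ has an open neighborhood containing no elements of $A$ that are $G$-connected to $x$; $\lambda(G)$ is the least size of a family of $G$-loose sets covering $X$. $P_G$ is the poset of pairs $p=\langle a_p,o_p\rangle$ with $a_p\subset X$ a finite $G$-anticlique and $o_p\supset a_p$ open, ordered by $q\leq p$ iff $a_p\subset a_q$ and $o_q\subset o_p$. For a poset $P$, a set $A\subset P$ is centered if every finite $b\subset A$ has a common lower bound in $P$; $P$ is $\sigma$-centered if it is a countable union of centered sets. A set $A\subset P$ is liminf centered if for every sequence $\langle p_i\colon i\in\omega\rangle$ of elements of $A$ there is $q\in P$ such that for every $r\leq q$ the set $\{i\in\omega\colon p_i$ is compatible with $r\}$ is infinite; $P$ is $\sigma$-liminf-centered if it is a countable union of liminf centered sets. *)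

(* Defs.v *)
From HB Require Import structures.
From mathcomp Require Import all_boot all_order all_algebra.
From mathcomp Require Import all_classical all_reals topology normedtype.
Set Implicit Arguments. Unset Strict Implicit. Unset Printing Implicit Defensive.
Import numFieldNormedType.Exports.
Local Open Scope classical_set_scope.

Section Defs.
Context {X : topologicalType}.

Definition is_graph (G : X -> X -> Prop) : Prop :=
  (forall x y, G x y -> G y x) /\ (forall x, ~ G x x).

(* closed in (X x X) minus the diagonal (subspace topology) *)
Definition closed_graph (G : X -> X -> Prop) : Prop :=
  is_graph G /\
  closure [set p : X * X | G p.1 p.2] `&` [set p | p.1 <> p.2]
    `<=` [set p | G p.1 p.2].

Definition anticlique (G : X -> X -> Prop) (A : set X) : Prop :=
  forall x y, A x -> A y -> x <> y -> ~ G x y.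

Definition loose (G : X -> X -> Prop) (A : set X) : Prop :=
  forall x : X, exists U : set X,
    open U /\ U x /\ (forall a, A a -> U a -> ~ G x a).

Definition chi_countable (G : X -> X -> Prop) : Prop :=
  exists A : nat -> set X,
    (forall n, anticlique G (A n)) /\ \bigcup_n A n = setT.

Definition lambda_countable (G : X -> X -> Prop) : Prop :=
  exists A : nat -> set X,
    (forall n, loose G (A n)) /\ \bigcup_n A n = setT.

(* The poset P_G: conditions p = (a_p, o_p) *)
Definition PG (G : X -> X -> Prop) : set (set X * set X) :=
  [set p | finite_set p.1 /\ anticlique G p.1 /\ open p.2 /\ p.1 `<=` p.2].

Definition PG_le (q p : set X * set X) : Prop :=
  p.1 `<=` q.1 /\ q.2 `<=` p.2.

Definition PG_compatible (G : X -> X -> Prop) (p q : set X * set X) : Prop :=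
  exists r, PG G r /\ PG_le r p /\ PG_le r q.

Definition centered (G : X -> X -> Prop) (A : set (set X * set X)) : Prop :=
  forall b : set (set X * set X), finite_set b -> b `<=` A ->
    exists q, PG G q /\ forall p, b p -> PG_le q p.

Definition sigma_centered (G : X -> X -> Prop) : Prop :=
  exists C : nat -> set (set X * set X),
    (forall n, C n `<=` PG G) /\ (forall n, centered G (C n)) /\
    \bigcup_n C n = PG G.

Definition liminf_centered (G : X -> X -> Prop) (A : set (set X * set X)) : Prop :=
  forall p : nat -> set X * set X, (forall i, A (p i)) ->
    exists q, PG G q /\
      forall r, PG G r -> PG_le r q ->
        infinite_set [set i : nat | PG_compatible G (p i) r].

Definition sigma_liminf_centered (G : X -> X -> Prop) : Prop :=
  exists C : nat -> set (set X * set X),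
    (forall n, C n `<=` PG G) /\ (forall n, liminf_centered G (C n)) /\
    \bigcup_n C n = PG G.

End Defs.

(* Main.v *)
Require Import Defs.
From HB Require Import structures.
From mathcomp Require Import all_boot all_order all_algebra.
From mathcomp Require Import all_classical all_reals topology normedtype.
From mathcomp Require Import finmap.
Import Order.TTheory GRing.Theory Num.Theory.
Local Open Scope classical_set_scope.

Lemma posnum_ex (R : realType) (e : R) : (0 < e)%R ->
  exists n : nat, (n.+1%:R^-1 < e)%R.
Proof.
move=> he.
have h0 : (0 <= e^-1)%R by rewrite invr_ge0 ltW.
have := archi_boundP h0; set N := Num.Def.archi_bound _ => hN.
exists N.
rewrite -[e]invrK ltf_pV2 ?posrE ?invr_gt0 ?ltr0Sn //.
apply: (lt_le_trans hN); rewrite ler_nat; exact: leqnSn.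
Qed.

Lemma cover_fin (T : topologicalType) (f : T -> set T) : compact [set: T] ->
  (forall x, open (f x)) -> (forall x, f x x) ->
  exists D : {fset T}, forall y, exists2 c, c \in D & f c y.
Proof.
move=> cT fo fx.
apply: contrapT => H.
have H' : forall D : {fset T}, exists y, forall c, c \in D -> ~ f c y.
  move=> D; apply: contrapT => nD; apply: H; exists D => y.
  apply: contrapT => ny; apply: nD; exists y => c cD fcy; apply: ny; by exists c.
pose F := filter_from [set: {fset T}] (fun D => [set y | forall c, c \in D -> ~ f c y]).
have FF : Filter F.
  apply: filter_from_filter; first by exists fset0.
  move=> i j _ _; exists (i `|` j)%fset => // z hz; split => d hd; apply: hz;
    by rewrite inE hd ?orbT.
have PF : ProperFilter F.
  apply: (filter_from_proper FF) => i _; have [y hy] := H' i; by exists y.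
have [x [_ cx]] := cT F PF (filterT).
have := cx [set y | forall c, c \in [fset x]%fset -> ~ f c y] (f x).
case.
- by exists [fset x]%fset.
- by apply: open_nbhs_nbhs; split.
move=> y [hy fy]; apply: (hy x) => //; by rewrite inE.
Qed.

Lemma cbase (R : realType) (X : pseudoMetricType R) : compact [set: X] ->
  exists B : nat * nat -> set X, (forall k, open (B k)) /\
    (forall x e, (0 < e)%R -> exists k, B k x /\ B k `<=` ball x e).
Proof.
move=> cX.
have hD : forall n : nat, exists D : {fset X},
    [set: X] `<=` \bigcup_(c in [set` D]) (ball c (n.+1%:R^-1))°.
  move=> n.
  have := @cover_fin X (fun c => (ball c (n.+1%:R^-1))°) cX.
  case.
  - by move=> i; exact: open_interior.
  - move=> x; rewrite /interior; apply: nbhsx_ballx.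
    by rewrite invr_gt0 ltr0Sn.
  move=> D HD; exists D => y _; have [c cD hc] := HD y; by exists c.
have [Df HDf] := choice hD.
exists (fun k => \bigcup_(c in [set c | c \in Df k.1 /\ index c (Df k.1) = k.2])
   (ball c (k.1.+1%:R^-1))°).
split.
  by move=> k; apply: bigcup_open => i _; exact: open_interior.
move=> x e he.
have he2 : (0 < e / 2)%R by rewrite divr_gt0.
have [n Hn] := @posnum_ex R _ he2.
have [c Dc xc] := HDf n x I.
exists (n, index c (Df n)); split.
  by exists c.
move=> y [c' [c'D ic'] yc'] /=.
have ec : c' = c.
  rewrite -(nth_index c c'D) /= ic' nth_index //.
subst c'.
apply: (@ball_split _ _ c).
  apply: (le_ball (ltW Hn)); apply: ball_sym; exact: nbhs_singleton xc.
apply: (le_ball (ltW Hn)); exact: nbhs_singleton yc'.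
Qed.

Set Implicit Arguments. Unset Strict Implicit. Unset Printing Implicit Defensive.

Definition small (R : realType) (P : R -> Prop) :=
  exists2 e : R, (0 < e)%R & forall d, (0 < d)%R -> (d <= e)%R -> P d.

Lemma small_and (R : realType) (P Q : R -> Prop) :
  small P -> small Q -> small (fun d => P d /\ Q d).
Proof.
move=> [e1 he1 H1] [e2 he2 H2]; exists (Num.min e1 e2).
  by rewrite lt_min he1 he2.
move=> d hd; rewrite le_min => /andP [d1 d2]; split; [exact: H1 | exact: H2].
Qed.

Lemma small_seq (R : realType) (T : eqType) (s : seq T) (P : T -> R -> Prop) :
  (forall i, i \in s -> small (P i)) -> small (fun d => forall i, i \in s -> P i d).
Proof.
elim: s => [|a s IH] H.
  by exists 1%R => // d _ _ i; rewrite in_nil.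
have IH' : small (fun d => forall i, i \in s -> P i d).
  by apply: IH => i hi; apply: H; rewrite in_cons hi orbT.
have [e he He] := small_and (H a (mem_head a s)) IH'.
exists e => // d hd hde i; rewrite in_cons => /orP [/eqP -> |hi].
  by case: (He d hd hde).
by case: (He d hd hde) => _; apply.
Qed.

Lemma small_fin (R : realType) (I : finType) (P : I -> R -> Prop) :
  (forall i, small (P i)) -> small (fun d => forall i, P i d).
Proof.
move=> H; have [e he He] := @small_seq R I (enum I) P (fun i _ => H i).
exists e => // d hd hde i; apply: He => //; by rewrite mem_enum.
Qed.

Lemma small_ball (R : realType) (X : pseudoMetricType R) (x : X) (U : set X) :
  nbhs x U -> small (fun d => ball x d `<=` U).
Proof.
move=> /nbhs_ballP [e he HU]; exists e => // d _ hd.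
exact: subset_trans (le_ball hd) HU.
Qed.

Lemma small_ex (R : realType) (P : R -> Prop) : small P -> exists2 e, (0 < e)%R & P e.
Proof. by move=> [e he H]; exists e => //; apply: H. Qed.

Lemma finite_nat_bound (S : set nat) : finite_set S -> exists M, forall i, S i -> i < M.
Proof.
move=> /finite_fsetP [D ->]; exists (\max_(i <- D) i).+1 => i hi.
rewrite ltnS; exact: (@leq_bigmax_seq _ _ xpredT id i).
Qed.

Lemma unbounded_infinite (S : set nat) : (forall M, exists i, M <= i /\ S i) -> infinite_set S.
Proof.
move=> H fS; have [M HM] := finite_nat_bound fS.
have [i [hi Si]] := H M; have := HM i Si; by rewrite ltnNge hi.
Qed.

Lemma graph_sep (X : topologicalType) (G : X -> X -> Prop) : closed_graph G ->
  forall x y, x <> y -> ~ G x y ->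
  exists U V, nbhs x U /\ nbhs y V /\ forall u v, U u -> V v -> ~ G u v.
Proof.
move=> [_ hc] x y xy nG.
have ncl : ~ closure [set p : X * X | G p.1 p.2] (x, y).
  by move=> cl; apply: nG; exact: (hc (x, y)).
have : exists Bp, nbhs (x, y) Bp /\ ~ ([set p : X * X | G p.1 p.2] `&` Bp !=set0).
  apply: contrapT => nex; apply: ncl => Bp hB; apply: contrapT => ne.
  by apply: nex; exists Bp.
move=> [Bp [[[U V] [hU hV] sub] hne]].
exists U, V; split => //; split => // u v Uu Vv Guv.
by apply: hne; exists (u, v); split => //; apply: sub.
Qed.


Definition T3 := (nat * (nat * nat) * (nat * nat))%type.

Section Cls.
Context (R : realType) (X : pseudoMetricType R) (G : X -> X -> Prop)
  (B : nat * nat -> set X) (A : nat -> set X).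

Definition Cls (m : nat) (lb : 'I_m -> T3) : set (set X * set X) :=
  [set p | PG G p /\
   (forall j l : 'I_m, j <> l -> forall u v, closure (B (lb j).1.2) u ->
       closure (B (lb l).1.2) v -> ~ G u v) /\
   (forall j, closure (B (lb j).1.2) `<=` B (lb j).2) /\
   (forall j, B (lb j).2 `<=` p.2) /\
   exists f : 'I_m -> X, p.1 = range f /\
     forall j, A (lb j).1.1 (f j) /\ B (lb j).1.2 (f j)].

Lemma Cls_cover (hG : closed_graph G) (Bo : forall k, open (B k))
  (hA : forall x, exists n, A n x)
  (hB : forall x e, (0 < e)%R -> exists k, B k x /\ B k `<=` ball x e)
  p : PG G p -> exists m (lb : {ffun 'I_m -> T3}), Cls lb p.
Proof.
case: p => a o; rewrite /PG /= => -[fa [aa [oo ao]]].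
have [S aS] := finite_fsetP.1 fa.
pose s := enum_fset S.
pose t := in_tuple s.
pose m := size s.
pose f := fun j : 'I_m => tnth t j.
have ra : a = range f.
  rewrite aS; apply/seteqP; split => x /=.
    move=> xS; have /tnthP [j ->] : x \in t by [].
    by exists j.
  move=> [j _ <-]; exact: mem_tnth.
have finj : injective f.
  apply/tuple_uniqP; exact: fset_uniq.
have fa' : forall j, a (f j) by move=> j; rewrite ra; exists j.
have hsm : small (fun d => (forall j, ball (f j) d `<=` o) /\
    (forall j l, f j <> f l -> forall u v, ball (f j) d u -> ball (f l) d v -> ~ G u v)).
  apply: small_and.
    apply: small_fin => j; apply: small_ball.
    by apply: open_nbhs_nbhs; split => //; apply: ao.
  apply: small_fin => j; apply: small_fin => l.
  case: (pselect (f j = f l)) => [e|ne].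
    by exists 1%R => // d _ _ /(_ e).
  have [U [V [hU [hV hUV]]]] := graph_sep hG ne (aa _ _ (fa' j) (fa' l) ne).
  have := small_and (small_ball hU) (small_ball hV).
  move=> [e he He]; exists e => // d hd hde _ u v hu hv.
  by case: (He d hd hde) => h1 h2; apply: hUV; [apply: h1 | apply: h2].
have [eps heps [Heo HeG]] := small_ex hsm.
have hl : forall j : 'I_m, exists v : T3, A v.1.1 (f j) /\ B v.1.2 (f j) /\
    closure (B v.1.2) `<=` B v.2 /\ B v.2 `<=` ball (f j) eps.
  move=> j.
  have [n hn] := hA (f j).
  have [k' [hk'1 hk'2]] := hB (f j) eps heps.
  have : nbhs (f j) (B k') by apply: open_nbhs_nbhs; split.
  move=> /nbhs_ballP [del hdel Hdel].
  have hdel2 : (0 < del / 2)%R by rewrite divr_gt0.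
  have [k [hk1 hk2]] := hB (f j) _ hdel2.
  exists (n, k, k'); split => //; split => //; split => // u hu /=.
  apply: Hdel.
  have [v [Bv bv]] := hu (ball u (del / 2)) (nbhsx_ballx _ _ hdel2).
  apply: (@ball_split _ _ v); first exact: hk2.
  exact: ball_sym.
have [lbf Hlbf] := choice hl.
exists m, [ffun j => lbf j]; split.
  by split => //.
split.
  move=> j l jl u v; rewrite !ffunE => hu hv.
  have [_ [_ [c1 c2]]] := Hlbf j.
  have [_ [_ [c3 c4]]] := Hlbf l.
  apply: (HeG j l _ _ _ (c2 _ (c1 _ hu)) (c4 _ (c3 _ hv))) => fe.
  by apply: jl; apply: finj.
split.
  by move=> j; rewrite ffunE; have [_ [_ [c1 _]]] := Hlbf j.
split.
  move=> j; rewrite ffunE; have [_ [_ [_ c2]]] := Hlbf j.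
  exact: subset_trans c2 (Heo j).
exists f; split => // j; rewrite ffunE; have [c1 [c2 _]] := Hlbf j; by split.
Qed.

End Cls.


Section Cent.
Context (R : realType) (X : pseudoMetricType R) (G : X -> X -> Prop)
  (B : nat * nat -> set X) (A : nat -> set X).

Lemma Cls_centered (Bo : forall k, open (B k))
  (hA : forall n, anticlique G (A n)) m (lb : 'I_m -> T3) :
  centered G (Cls G B A lb).
Proof.
move=> b fb sb.
pose W := \bigcup_(j in [set: 'I_m]) B (lb j).2.
exists (\bigcup_(p in b) p.1, W); split.
  split.
    apply: bigcup_finite => // p bp; by have [[]] := sb p bp.
  split.
    move=> x y [p bp xp] [p' bp' yp'] xy.
    have [_ [pw [_ [_ [f [e1 e2]]]]]] := sb p bp.
    have [_ [_ [_ [_ [f' [e1' e2']]]]]] := sb p' bp'.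
    rewrite e1 in xp; rewrite e1' in yp'.
    case: xp => j _ hx; case: yp' => l _ hy; subst x y.
    have [jl|jl] := eqVneq j l.
      subst l; exact: (hA _ _ _ (e2 j).1 (e2' j).1 xy).
    apply: (pw j l); first by apply/eqP.
      exact/subset_closure/(e2 j).2.
    exact/subset_closure/(e2' l).2.
  split.
    by apply: bigcup_open => j _; apply: Bo.
  move=> x [p bp xp].
  have [_ [_ [c3 [_ [f [e1 e2]]]]]] := sb p bp.
  rewrite e1 in xp; case: xp => j _ <-.
  exists j => //; apply: c3; exact/subset_closure/(e2 j).2.
move=> p bp; split => /=.
  by move=> x xp; exists p.
move=> x [j _ hj]; have [_ [_ [_ [c4 _]]]] := sb p bp; exact: c4 hj.
Qed.

End Cent.


Section Lim.
Import ArrowAsProduct.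
Context (R : realType) (X : pseudoMetricType R) (G : X -> X -> Prop)
  (B : nat * nat -> set X) (A : nat -> set X).

Lemma Cls_liminf (hG : closed_graph G) (cX : compact [set: X])
  (Bo : forall k, open (B k))
  (hA : forall n, loose G (A n)) m (lb : 'I_m -> T3) :
  liminf_centered G (Cls G B A lb).
Proof.
move=> p hp.
have hf : forall i, exists f : 'I_m -> X, (p i).1 = range f /\
    forall j, A (lb j).1.1 (f j) /\ B (lb j).1.2 (f j).
  by move=> i; have [_ [_ [_ [_ h]]]] := hp i.
have [F HF] := choice hf.
have cP : compact [set: forall j : 'I_m, X].
  have := @tychonoff 'I_m (fun _ => X) (fun _ => [set: X]) (fun _ => cX).
  by congr compact; apply/seteqP; split.
have [y [_ cly]] := cP (F @ \oo) _ filterT.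
have clu : forall N, nbhs y N -> forall M, exists i, M <= i /\ N (F i).
  move=> N hN M.
  have [g [[i [hi ->]] Ng]] := cly [set g | exists i, M <= i /\ g = F i] N
     (ex_intro2 _ _ M I (fun i hi => ex_intro _ i (conj hi erefl))) hN.
  by exists i.
have hproj : forall (j : 'I_m) (U : set X), nbhs (y j) U -> nbhs y [set g | U (g j)].
  move=> j U hU; exact: (@proj_continuous 'I_m (fun _ => X) j y U hU).
have [[Gsym Girr] _] := hG.
have ycl : forall j, closure (B (lb j).1.2) (y j).
  move=> j U hU; have [i [_ hi]] := clu _ (hproj j U hU) 0.
  by exists (F i j); split => //; exact: ((HF i).2 j).2.
have [_ [pw [c3 [c4 _]]]] := hp 0.
pose W := \bigcup_(j in [set: 'I_m]) B (lb j).2.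
have Wo : open W by apply: bigcup_open => j _; apply: Bo.
have yW : forall j, W (y j) by move=> j; exists j => //; apply: c3; exact: ycl.
have Wp : forall i, W `<=` (p i).2.
  by move=> i x [j _ hj]; have [_ [_ [_ [c4' _]]]] := hp i; exact: c4' hj.
exists (range y, W); split.
  split; first exact: finite_image _ finite_finset.
  split.
    move=> _ _ [j _ <-] [l _ <-] yjl.
    have jl : j <> l by move=> e; apply: yjl; rewrite e.
    exact: (pw j l jl _ _ (ycl j) (ycl l)).
  split => //; by move=> _ [j _ <-]; apply: yW.
case=> r1 r2; rewrite /PG /PG_le /=.
move=> -[fr [ar [or sr]]] [rq1 rq2].
have yr : forall j, r1 (y j) by move=> j; apply: rq1; exists j.
pose N := [set g : 'I_m -> X | forall j, r2 (g j) /\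
  forall z, r1 z -> z <> g j -> A (lb j).1.1 (g j) -> ~ G z (g j)].
have FN : Filter (nbhs y) by apply: nbhs_filter.
have hN : nbhs y N.
  suff H : forall j : 'I_m, nbhs y [set g : 'I_m -> X | r2 (g j) /\
      forall z, r1 z -> z <> g j -> A (lb j).1.1 (g j) -> ~ G z (g j)].
    have := @filter_forall _ 'I_m (fun j (g : 'I_m -> X) => r2 (g j) /\
      forall z, r1 z -> z <> g j -> A (lb j).1.1 (g j) -> ~ G z (g j)) (nbhs y) FN H.
    move=> hH; apply: (@filterS _ _ FN _ _ _ hH); by move=> g hg j; exact: hg j.
  move=> j.
  apply: (hproj j (fun x => r2 x /\ forall z, r1 z -> z <> x -> A (lb j).1.1 x -> ~ G z x)).
  apply: filterI.
    by apply: open_nbhs_nbhs; split => //; apply: sr.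
  have [S rS] := finite_fsetP.1 fr.
  have : nbhs (y j) (\bigcap_(z in [set` S]) [set x | z <> x -> A (lb j).1.1 x -> ~ G z x]).
    apply: filter_bigI => z zS.
    have r1z : r1 z by rewrite rS.
    have [e|ne] := pselect (z = y j).
      subst z; have [U [oU [Uy HU]]] := hA (lb j).1.1 (y j).
      apply: (@filterS _ _ _ U); last by apply: open_nbhs_nbhs.
      by move=> x Ux _ Ax; apply: HU.
    have nG : ~ G z (y j) by apply: ar.
    have [U [V [hU [hV hUV]]]] := graph_sep hG ne nG.
    apply: (@filterS _ _ _ V) => // x Vx _ _.
    apply: hUV => //; exact: nbhs_singleton hU.
  apply: filterS => x hx z r1z; apply: hx; by rewrite rS in r1z.
apply: unbounded_infinite => M.
have [i [hi Ni]] := clu N hN M.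
exists i; split => //.
have [[fp [ap [op sp]]] _] := hp i.
have [e1 e2] := HF i.
exists ((p i).1 `|` r1, r2 `&` (p i).2); split; last first.
  split; split => /=.
  - by move=> x; left.
  - by move=> x [].
  - by move=> x; right.
  - by move=> x [].
split; first by rewrite /= finite_setU.
split.
  have mixed : forall x z, (p i).1 x -> r1 z -> x <> z -> ~ G z x.
    move=> x z; rewrite e1 => -[j _ <-] r1z xz.
    apply: (Ni j).2 => //; last exact: ((e2 j).1).
    by move=> ez; apply: xz.
  move=> x z /= [xp|xr] [zp|zr] xz.
  - exact: ap.
  - by move=> Gxz; apply: (mixed x z xp zr xz); apply: Gsym.
  - by apply: (mixed z x zp xr) => e; apply: xz.
  - exact: ar.
split; first exact: openI.
move=> x /= [xp|xr]; split.
- by move: xp; rewrite e1 => -[j _ <-]; exact: (Ni j).1.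
- exact: sp.
- exact: sr.
- by apply: Wp; apply: rq2; apply: sr.
Qed.
End Lim.


Lemma infinite_ex (S : set nat) : infinite_set S -> forall M, exists i, M <= i /\ S i.
Proof.
move=> hS M; apply: contrapT => ne; apply: hS.
apply: (@sub_finite_set _ _ `I_M); last exact: finite_II.
move=> i Si /=; rewrite ltnNge; apply/negP => hi; apply: ne; by exists i.
Qed.

Lemma PG_single (X : topologicalType) (G : X -> X -> Prop) (x : X) :
  PG G ([set x], setT).
Proof.
split; first exact: finite_set1.
split; first by move=> a b /= -> ->.
by split; [exact: openT | move=> a].
Qed.

Definition Idx := {m : nat & {ffun 'I_m -> T3}}.

Definition Cfam (R : realType) (X : pseudoMetricType R) (G : X -> X -> Prop)
  (B : nat * nat -> set X) (A : nat -> set X) (n : nat) : set (set X * set X) :=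
  match (choice.unpickle n : option Idx) with
  | Some z => Cls G B A (projT2 z)
  | None => set0
  end.

Lemma Cfam_PG (R : realType) (X : pseudoMetricType R) (G : X -> X -> Prop)
  (B : nat * nat -> set X) (A : nat -> set X) n : Cfam G B A n `<=` PG G.
Proof. by rewrite /Cfam; case: choice.unpickle => [z|] // p [hp _]. Qed.

Lemma Cfam_cover (R : realType) (X : pseudoMetricType R) (G : X -> X -> Prop)
  (B : nat * nat -> set X) (A : nat -> set X) (hG : closed_graph G)
  (Bo : forall k, open (B k))
  (hA : forall x, exists n, A n x)
  (hB : forall x e, (0 < e)%R -> exists k, B k x /\ B k `<=` ball x e) :
  \bigcup_n Cfam G B A n = PG G.
Proof.
apply/seteqP; split.
  by move=> p [n _ hp]; exact: Cfam_PG hp.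
move=> p hp; have [m [lb hc]] := Cls_cover hG Bo hA hB hp.
exists (choice.pickle (existT _ m lb : Idx)) => //.
by rewrite /Cfam choice.pickleK.
Qed.

Theorem theorem3p7 (R : realType) (X : pseudoMetricType R)
  (hX : hausdorff_space X) (cX : compact [set: X])
  (G : X -> X -> Prop) (hG : closed_graph G) :
  (sigma_centered G <-> chi_countable G) /\
  (sigma_liminf_centered G <-> lambda_countable G).
Proof.
have [B [Bo hB]] := @cbase R X cX.
have [[Gsym Girr] _] := hG.
have covA : forall An : nat -> set X, \bigcup_n An n = setT -> forall x, exists n, An n x.
  move=> An cov x; have : (\bigcup_n An n) x by rewrite cov.
  by move=> [n _ h]; exists n.
have single_cov : forall C : nat -> set (set X * set X), \bigcup_n C n = PG G ->
    \bigcup_n [set x | C n ([set x], setT)] = setT.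
  move=> C Ccov; apply/seteqP; split => // x _.
  have : (\bigcup_n C n) ([set x], setT) by rewrite Ccov; exact: PG_single.
  by move=> [n _ h]; exists n.
split; split.
- move=> [C [CP [Cc Ccov]]].
  exists (fun n => [set x | C n ([set x], setT)]); split; last exact: single_cov.
  move=> n x y hx hy xy Gxy.
  have sb : [set ([set x], setT); ([set y], setT)] `<=` C n by move=> p [->|->].
  have [q [Pq Hq]] := Cc n _ (finite_set2 _ _) sb.
  have [qx _] := Hq _ (or_introl erefl).
  have [qy _] := Hq _ (or_intror erefl).
  have [_ [aq _]] := Pq.
  exact: (aq x y (qx x erefl) (qy y erefl) xy Gxy).
- move=> [An [hA cov]].
  exists (Cfam G B An); split; first exact: Cfam_PG.
  split; last exact: Cfam_cover hG Bo (covA An cov) hB.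
  move=> n; rewrite /Cfam; case: choice.unpickle => [z|].
    exact: Cls_centered.
  move=> b _ sb; exists (set0, set0); split.
    split; first exact: finite_set0.
    by split; [move=> ? ? | split; [exact: open0 | ]].
  by move=> p /sb.
- move=> [C [CP [Cl Ccov]]].
  exists (fun n => [set x | C n ([set x], setT)]); split; last exact: single_cov.
  move=> n z; apply: contrapT => nl.
  have H : forall U, open U -> U z -> exists a, C n ([set a], setT) /\ U a /\ G z a.
    move=> U oU Uz; apply: contrapT => ne; apply: nl; exists U; split => //.
    split => // a Aa Ua Gza; apply: ne; by exists a.
  have ri : forall i : nat, (0 < i.+1%:R^-1 :> R)%R by move=> i; rewrite invr_gt0 ltr0Sn.
  have H2 : forall i : nat, exists a, C n ([set a], setT) /\
      (ball z (i.+1%:R^-1))° a /\ G z a.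
    move=> i; apply: H; first exact: open_interior.
    exact: nbhsx_ballx.
  have [a Ha] := choice H2.
  have [q [Pq Hq]] := Cl n (fun i => ([set a i], setT)) (fun i => (Ha i).1).
  have [fq [aq [oq sq]]] := Pq.
  have [qz|nqz] := pselect (q.1 z).
    have [i [_ [r [Pr [[ra _] [rq _]]]]]] := infinite_ex (Hq q Pq (conj (fun _ h => h) (fun _ h => h))) 0.
    have [_ [ar _]] := Pr.
    have [_ [_ Gza]] := Ha i.
    apply: (ar z (a i) (rq z qz) (ra (a i) erefl)) => // e.
    by apply: (Girr z); rewrite {2}e.
  have cq : closed q.1 := compact_closed hX (finite_compact fq).
  have : nbhs z (~` q.1).
    by apply: open_nbhs_nbhs; split => //; exact: closed_openC.
  move=> /nbhs_ballP [e he He].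
  have he2 : (0 < e / 2)%R by rewrite divr_gt0.
  pose V := \bigcup_(y in q.1) (ball y (e / 2))°.
  have Pr : PG G (q.1, q.2 `&` V).
    split => //; split => //; split => /=.
      apply: openI => //; apply: bigcup_open => y _; exact: open_interior.
    move=> x qx; split; first exact: sq.
    by exists x => //; exact: nbhsx_ballx.
  have [N hN] := @posnum_ex R _ he2.
  have [i [hi [r [Pr' [[ra _] [_ rV]]]]]] :=
    infinite_ex (Hq _ Pr (conj (fun _ h => h) (fun _ h => proj1 h))) N.
  have [_ [_ [_ sr]]] := Pr'.
  have := rV _ (sr _ (ra (a i) erefl)).
  move=> [_ [y qy hy]].
  have [_ [hzi _]] := Ha i.
  have bz : ball z (e / 2) (a i).
    apply: (le_ball _ (nbhs_singleton hzi)).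
    apply: (le_trans _ (ltW hN)).
    rewrite lef_pV2 ?posrE ?ltr0Sn // ler_nat ltnS; exact: hi.
  have : ball z e y.
    apply: (@ball_split _ _ (a i)) => //.
    apply: ball_sym; exact: nbhs_singleton hy.
  by move=> /He.
- move=> [An [hA cov]].
  exists (Cfam G B An); split; first exact: Cfam_PG.
  split; last exact: Cfam_cover hG Bo (covA An cov) hB.
  move=> n; rewrite /Cfam; case: choice.unpickle => [z|].
    exact: Cls_liminf.
  by move=> p hp; have := hp 0.
Qed.
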